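(* Let $S, U, M \ge 1$ be integers and let $\mu_Q \in \mathbb{R}_{+}^{S \times U}$ with rows $\mu_{q^{(1)}}, \dots, \mu_{q^{(S)}} \in \mathbb{R}_+^{U}$. Let $\mathbb{N} = \{0,1,2,\dots\}$ and let $\preceq$ (resp. $\succeq$) denote entrywise $\le$ (resp. $\ge$). Say that a subset $\mathcal{M} \subseteq \{1,\dots,S\}$ \emph{suffices for minimum matching} if for every agent distribution $X \in \mathbb{N}^{M \times S}$ there exists $\hat X \in \mathbb{N}^{M \times S}$ whose columns indexed by $s \notin \mathcal{M}$ are identically zero and such that $X \mu_Q \preceq \hat X \mu_Q$. Then $\mathcal{M}$ suffices for minimum matching if and only if for every $\tilde s \in \{1,\dots,S\} \setminus \mathcal{M}$ there exist nonnegative integers $\alpha_{s\tilde s} \in \mathbb{N}$, $s \in \mathcal{M}$, with $$\sum_{s \in \mathcal{M}} \alpha_{s\tilde s}\, \mu_{q^{(s)}} \succeq \mu_{q^{(\tilde s)}}.$$ Consequently, the minspecies cardinality for minimum matching, $\mathcal{D}_{\mathcal{G}_2}(\mu_Q)$ (the minimum cardinality of a subset $\mathcal{M}$ that suffices for minimum matching), equals $$\min\Big\{ |\mathcal{M}_2| : \mathcal{M}_2 \subseteq \{1,\dots,S\},\ \forall \tilde s \notin \mathcal{M}_2\ \exists (\alpha_{s\tilde s})_{s\in\mathcal{M}_2} \in \mathbb{N}^{\mathcal{M}_2} \text{ with } \textstyle\sum_{s \in \mathcal{M}_2} \alpha_{s\tilde s}\, \mu_{q^{(s)}} \succeq \mu_{q^{(\tilde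 s)}} \Big\}.$$
   Context: A heterogeneous team consists of $S$ species; $\mu_Q$ is the expected species-trait matrix whose $(s,u)$ entry is the expected value of trait $u$ for an agent of species $s$. There are $M$ tasks; an agent distribution is a matrix $X \in \mathbb{N}^{M\times S}$ whose $(i,s)$ entry is the number of agents of species $s$ assigned to task $i$, and the resulting expected task-trait distribution is $X\mu_Q \in \mathbb{R}_+^{M\times U}$. The minimum-matching goal for a desired trait distribution $Y^*$ requires $Y^* \preceq X\mu_Q$ entrywise (over-provisioning allowed). The number of available agents per species is not bounded in this statement. *)

(* Defs.v *)
From HB Require Import structures.
From mathcomp Require Import all_boot all_order all_algebra.
Set Implicit Arguments. Unset Strict Implicit. Unset Printing Implicit Defensive.
Import Order.TTheory GRing.Theory Num.Theory.
Local Open Scope ring_scope.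

Definition natmx (R : realFieldType) m n (X : 'M[nat]_(m, n)) : 'M[R]_(m, n) :=
  map_mx (fun k : nat => k%:R) X.

Definition task_traits (R : realFieldType) (M S U : nat)
  (X : 'M[nat]_(M, S)) (mu : 'M[R]_(S, U)) : 'M[R]_(M, U) :=
  natmx R X *m mu.

Definition suffices_minmatch (R : realFieldType) (S U M : nat)
  (mu : 'M[R]_(S, U)) (Ms : {set 'I_S}) : Prop :=
  forall X : 'M[nat]_(M, S), exists Xh : 'M[nat]_(M, S),
    (forall (i : 'I_M) (s : 'I_S), s \notin Ms -> Xh i s = 0%N) /\
    (forall (i : 'I_M) (u : 'I_U),
        task_traits X mu i u <= task_traits Xh mu i u).

Definition int_dominated (R : realFieldType) (S U : nat)
  (mu : 'M[R]_(S, U)) (Ms : {set 'I_S}) : Prop :=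
  forall st : 'I_S, st \notin Ms ->
    exists alpha : 'I_S -> nat,
      forall u : 'I_U, mu st u <= \sum_(s in Ms) (alpha s)%:R * mu s u.

Definition is_min_card (S : nat) (P : {set 'I_S} -> Prop) (n : nat) : Prop :=
  (exists A : {set 'I_S}, P A /\ #|A| = n) /\
  (forall A : {set 'I_S}, P A -> (n <= #|A|)%N).

(* Main.v *)
Require Import Defs.
From HB Require Import structures.
From mathcomp Require Import all_boot all_order all_algebra.
Import Order.TTheory GRing.Theory Num.Theory.
Local Open Scope ring_scope.

Lemma part1 (R : realFieldType) (S U M : nat)
  (hM : (0 < M)%N)
  (mu : 'M[R]_(S, U)) (hmu : forall s u, 0 <= mu s u) (Ms : {set 'I_S}) :
      suffices_minmatch M mu Ms <-> int_dominated mu Ms.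
Proof.
split.
- move=> H st hst.
  pose i0 : 'I_M := Ordinal hM.
  pose X : 'M[nat]_(M, S) := \matrix_(i, s) (if (i == i0) && (s == st) then 1%N else 0%N).
  have [Xh [H0 H1]] := H X.
  exists (fun s => Xh i0 s) => u.
  have := H1 i0 u.
  rewrite /task_traits /natmx !mxE.
  rewrite (bigD1 st) //= big1 ?addr0; last first.
    by move=> s /negbTE hs; rewrite !mxE eqxx hs /= mul0r.
  rewrite !mxE !eqxx /= mul1r => /le_trans; apply.
  rewrite (bigID (fun s => s \in Ms)) /= [X in _ + X]big1 ?addr0.
    by rewrite le_eqVlt; apply/orP; left; apply/eqP; apply: eq_bigr => s _; rewrite mxE.
  by move=> s hs; rewrite mxE H0 // mul0r.
- move=> H X.
  have [al Hal] : exists al : 'I_S -> 'I_S -> nat, forall st, st \notin Ms ->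
      forall u, mu st u <= \sum_(s in Ms) (al st s)%:R * mu s u.
    have Hex : forall st : 'I_S, exists a : 'I_S -> nat, st \notin Ms ->
        forall u, mu st u <= \sum_(s in Ms) (a s)%:R * mu s u.
      move=> st; case: (boolP (st \in Ms)) => hst.
        by exists (fun _ => 0%N).
      by have [a Ha] := H st hst; exists a.
    exact: (@fin_all_exists _ (fun _ => 'I_S -> nat) _ Hex).
  exists (\matrix_(i, s) (if s \in Ms then
      (X i s + \sum_(st | st \notin Ms) X i st * al st s)%N else 0%N)).
  split.
    by move=> i s /negbTE hs; rewrite mxE hs.
  move=> i u; rewrite /task_traits /natmx !mxE.
  rewrite [leRHS](bigID (fun s => s \in Ms)) /= [X in _ + X]big1 ?addr0; last first.
    by move=> s /negbTE hs; rewrite !mxE hs mul0r.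
  rewrite [leLHS](bigID (fun s => s \in Ms)) /=.
  have -> : \sum_(s in Ms) map_mx (fun k : nat => k%:R) (\matrix_(i0, s0)
      (if s0 \in Ms then (X i0 s0 + \sum_(st | st \notin Ms) X i0 st * al st s0)%N
       else 0%N)) i s * mu s u =
      \sum_(s in Ms) map_mx (fun k : nat => k%:R) X i s * mu s u +
      \sum_(st | st \notin Ms) (X i st)%:R *
          \sum_(s in Ms) (al st s)%:R * mu s u.
    rewrite [X in _ = _ + X](eq_bigr _ (fun st _ => big_distrr _ _ _)) /=.
    rewrite (exchange_big_dep (fun s => s \in Ms)) //= -big_split /=.
    apply: eq_bigr => s hs; rewrite !mxE hs natrD mulrDl natr_sum mulr_suml.
    congr (_ + _).
    by apply: eq_big => [st|st _]; [rewrite andbT | rewrite natrM -mulrA].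
  rewrite lerD2l; apply: ler_sum => st hst; rewrite mxE.
  by apply: ler_wpM2l; [exact: ler0n | exact: Hal].
Qed.

Theorem proposition2 (R : realFieldType) (S U M : nat)
  (hS : (0 < S)%N) (hU : (0 < U)%N) (hM : (0 < M)%N)
  (mu : 'M[R]_(S, U)) (hmu : forall s u, 0 <= mu s u) :
  (forall Ms : {set 'I_S},
      suffices_minmatch M mu Ms <-> int_dominated mu Ms) /\
  (forall n : nat,
      is_min_card (suffices_minmatch M mu) n <->
      is_min_card (int_dominated mu) n).
Proof.
have P1 := @part1 R S U M hM mu hmu.
split => // n; split=> [[[A [HA HAn]] Hmin]|[[A [HA HAn]] Hmin]]; split.
- by exists A; split => //; apply/P1.
- by move=> B /P1; apply: Hmin.
- by exists A; split => //; apply/P1.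
- by move=> B /P1; apply: Hmin.
Qed.
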